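(* Let $\Sigma=(I,X,\mathcal U,\phi,Y,h)$ be a forward complete control system with outputs. If $\Sigma$ is OCAG and OUGS, then $\Sigma$ is IOS.
   Context: Let $I\in\{\mathbb N_0,\mathbb R_0^+\}$. A forward complete control system with outputs $\Sigma=(I,X,\mathcal U,\phi,Y,h)$ consists of: a normed space $(X,\|\cdot\|_X)$; a vector space $U$ and a normed linear subspace $(\mathcal U,\|\cdot\|_{\mathcal U})$ of $\{u:I\to U\}$ such that for all $u\in\mathcal U,\tau\in I$, $u(\cdot+\tau)\in\mathcal U$ with $\|u(\cdot+\tau)\|_{\mathcal U}\le\|u\|_{\mathcal U}$, and for $t_2\ge t_1\ge 0$ the function $u|_{[t_1,t_2]}$ ($u$ on $[t_1,t_2]$, $0$ elsewhere) lies in $\mathcal U$ with norm $\le\|u\|_{\mathcal U}$; a map $\phi:I\times X\times\mathcal U\to X$ with $\phi(0,x,u)=x$, causality, and cocycle property $\phi(t+s,x,u)=\phi(s,\phi(t,x,u),u(t+\cdot))$; a normed space $Y$ and $h:X\times U\to Y$. Write $y(t,x,u)=h(\phi(t,x,u),u(t))$. $\mathcal K_\infty$ and $\mathcal{KL}$ are the standard comparison function classes. OCAG: $\exists\beta\in\mathcal{KL},\gamma\in\mathcal K_\infty,c\ge0$ with $\|y(t,x,u)\|_Y\le\beta(\|x\|_X+c,t)+\gamma(\|u\|_{\mathcal U})$ for all $x\in X,u\in\mathcal U,t\in I$. OUGS: $\exists\sigma,\gamma\in\mathcal K_\infty$ with $\|y(t,x,u)\|_Y\le\sigma(\|x\|_X)+\gamma(\|u\|_{\mathcal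 U})$ for all $x,u,t$. IOS: $\exists\beta\in\mathcal{KL},\gamma\in\mathcal K_\infty$ with $\|y(t,x,u)\|_Y\le\beta(\|x\|_X,t)+\gamma(\|u\|_{\mathcal U})$ for all $x,u,t$. *)

(* Defs.v *)
From HB Require Import structures.
From mathcomp Require Import all_boot all_order all_algebra.
From mathcomp Require Import all_classical all_reals all_analysis.
Set Implicit Arguments. Unset Strict Implicit. Unset Printing Implicit Defensive.
Import Order.TTheory GRing.Theory Num.Theory.
Import numFieldNormedType.Exports.
Local Open Scope classical_set_scope.
Local Open Scope ring_scope.

Section Defs.
Variable R : realType.

(* Comparison functions, on R_0^+ (values of f outside [0,oo) are irrelevant). *)
Definition classK (f : R -> R) : Prop :=
  {within [set x | 0 <= x], continuous f} /\ f 0 = 0 /\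
  (forall x y, 0 <= x -> x < y -> f x < f y).

Definition classKinf (f : R -> R) : Prop :=
  classK f /\ (forall M, exists x, 0 <= x /\ M < f x).

Definition classKL (beta : R -> R -> R) : Prop :=
  {within [set p : R * R | 0 <= p.1 /\ 0 <= p.2],
     continuous (fun p : R * R => beta p.1 p.2)} /\
  (forall t, 0 <= t -> classK (fun r => beta r t)) /\
  (forall r, 0 <= r ->
     (forall s t, 0 <= s -> s <= t -> beta r t <= beta r s) /\
     (beta r t @[t --> +oo] --> 0)).

Definition timeset (disc : bool) : set R :=
  if disc then [set t | exists n : nat, t = n%:R] else [set t | 0 <= t].

Variable U : lmodType R.

(* Inputs I -> U are encoded as functions R -> U vanishing outside I. *)
Definition ishift (disc : bool) (u : R -> U) (tau : R) : R -> U :=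
  fun t => if `[< timeset disc t >] then u (t + tau) else 0.

Definition irestr (disc : bool) (u : R -> U) (t1 t2 : R) : R -> U :=
  fun t => if `[< timeset disc t /\ t1 <= t <= t2 >] then u t else 0.

Definition input_space (disc : bool) (Uset : set (R -> U))
  (normU : (R -> U) -> R) : Prop :=
  [/\ (forall u, Uset u -> forall t, ~ timeset disc t -> u t = 0),
      [/\ Uset (fun _ => 0),
      (forall u v, Uset u -> Uset v -> Uset (fun t => u t + v t)) &
      (forall (a : R) u, Uset u -> Uset (fun t => a *: u t))],
      [/\ (forall u, Uset u -> 0 <= normU u),
          normU (fun _ => 0) = 0,
          (forall u, Uset u -> normU u = 0 -> u = (fun _ => 0)),
          (forall u v, Uset u -> Uset v ->
              normU (fun t => u t + v t) <= normU u + normU v) &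
          (forall (a : R) u, Uset u -> normU (fun t => a *: u t) = `|a| * normU u)],
      (forall u tau, Uset u -> timeset disc tau ->
          Uset (ishift disc u tau) /\ normU (ishift disc u tau) <= normU u) &
      (forall u t1 t2, Uset u -> 0 <= t1 -> t1 <= t2 ->
          Uset (irestr disc u t1 t2) /\ normU (irestr disc u t1 t2) <= normU u)].

(* Forward complete control system: phi is total; identity, causality, cocycle. *)
Definition control_system (disc : bool) (X : normedModType R)
  (Uset : set (R -> U)) (normU : (R -> U) -> R)
  (phi : R -> X -> (R -> U) -> X) : Prop :=
  [/\ input_space disc Uset normU,
      (forall x u, Uset u -> phi 0 x u = x),
      (forall t x u v, timeset disc t -> Uset u -> Uset v ->
          (forall s, timeset disc s -> s <= t -> u s = v s) ->
          phi t x u = phi t x v) &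
      (forall t s x u, timeset disc t -> timeset disc s -> Uset u ->
          phi (t + s) x u = phi s (phi t x u) (ishift disc u t))].

Variables (X Y : normedModType R).

Definition output (phi : R -> X -> (R -> U) -> X) (h : X -> U -> Y)
  (t : R) (x : X) (u : R -> U) : Y := h (phi t x u) (u t).

Definition OCAG disc (Uset : set (R -> U)) normU phi (h : X -> U -> Y) : Prop :=
  exists beta gamma (c : R), classKL beta /\ classKinf gamma /\ 0 <= c /\
    forall x u t, Uset u -> timeset disc t ->
      `|output phi h t x u| <= beta (`|x| + c) t + gamma (normU u).

Definition OUGS disc (Uset : set (R -> U)) normU phi (h : X -> U -> Y) : Prop :=
  exists sigma gamma, classKinf sigma /\ classKinf gamma /\
    forall x u t, Uset u -> timeset disc t ->
      `|output phi h t x u| <= sigma `|x| + gamma (normU u).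

Definition IOS disc (Uset : set (R -> U)) normU phi (h : X -> U -> Y) : Prop :=
  exists beta gamma, classKL beta /\ classKinf gamma /\
    forall x u t, Uset u -> timeset disc t ->
      `|output phi h t x u| <= beta `|x| t + gamma (normU u).

End Defs.

(* Main.v *)
Require Import Defs.
From HB Require Import structures.
From mathcomp Require Import all_boot all_order all_algebra.
From mathcomp Require Import all_classical all_reals all_analysis.
From mathcomp Require Import lra.
Import Order.TTheory GRing.Theory Num.Theory.
Import numFieldNormedType.Exports.
Local Open Scope classical_set_scope.
Local Open Scope ring_scope.

Section Helpers.
Variable R : realType.

Lemma comp_within {T1 T2 : topologicalType} {S : topologicalType}
  (A : set T1) (B : set T2) (g : T1 -> T2) (f : T2 -> S) x :
  (forall y, A y -> B (g y)) -> {for x, continuous g} ->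
  f @ within B (nbhs (g x)) --> f (g x) ->
  (f \o g) @ within A (nbhs x) --> f (g x).
Proof.
move=> AB cg cf P /cf /= /cg /=.
move=> H; have H2 : nbhs x (fun z => B (g z) -> P (f (g z))) := H. suff : nbhs x (fun z => A z -> P (f (g z))) by []. by apply: filterS H2 => z Hz Az; apply: Hz; exact: AB.
Qed.

Lemma classK_ge0 (f : R -> R) x : classK f -> 0 <= x -> 0 <= f x.
Proof.
move=> [_ [f0 fi]] x0; rewrite le_eqVlt in x0; case/orP: x0 => [/eqP <-|x0].
  by rewrite f0.
by rewrite -f0; apply/ltW/fi.
Qed.

Lemma within_cont {T S : topologicalType} (A : set T) (f : T -> S) x : {within A, continuous f} -> A x ->
  f @ within A (nbhs x) --> f x.
Proof. by move=> /subspace_continuousP H Ax; apply: H. Qed.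

End Helpers.

Theorem lemma9 (R : realType) (disc : bool) (X Y : normedModType R)
  (U : lmodType R) (Uset : set (R -> U)) (normU : (R -> U) -> R)
  (phi : R -> X -> (R -> U) -> X) (h : X -> U -> Y) :
  control_system disc Uset normU phi ->
  OCAG disc Uset normU phi h ->
  OUGS disc Uset normU phi h ->
  IOS disc Uset normU phi h.
Proof.
move=> [[_ _ [nU0 _ _ _ _] _ _] _ _ _].
move=> [b1 [g1 [c [[b1c [b1K b1L]] [g1K [c0 Hb]]]]]].
move=> [s [g2 [sK [g2K Hs]]]].
exists (fun r t => Num.min (b1 (r + c) t) (s r)), (fun r => g1 r + g2 r).
split; [|split].
- split; [|split].
  + apply/subspace_continuousP => p Qp.
    apply: (@continuous2_cvg _ _ _ _ _ _ (fun p : R * R => b1 (p.1 + c) p.2)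
              (fun p : R * R => s p.1) Num.min).
    * exact: (@min_continuous _ R (_, _)).
    * apply: (@comp_within _ _ _ _ [set q : R * R | 0 <= q.1 /\ 0 <= q.2] (fun q : R * R => (q.1 + c, q.2))
                (fun q : R * R => b1 q.1 q.2)).
      -- by move=> y /= [y1 y2]; split => //; lra.
      -- rewrite /continuous_at.
         apply: (@cvg_pair _ _ _ (nbhs p) (nbhs (p.1 + c)) (nbhs p.2)); last exact: cvg_snd.
         by apply: cvgD; [exact: cvg_fst | exact: cvg_cst].
      -- have := @within_cont _ _ _ _ (p.1 + c, p.2) b1c; apply => /=.
         by case: Qp => ? ?; split => //; lra.
    * apply: (@comp_within _ _ _ _ [set r : R | 0 <= r] fst s).
      -- by move=> y [].
      -- exact: cvg_fst.
      -- by apply: within_cont; [case: sK => [[]] | case: Qp].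
  + move=> t t0; split; [|split].
    * apply/subspace_continuousP => r r0.
      apply: (@continuous2_cvg _ _ _ _ _ _ (fun r => b1 (r + c) t) s Num.min).
      -- exact: (@min_continuous _ R (_, _)).
      -- apply: (@comp_within _ _ _ _ [set r : R | 0 <= r] (fun r => r + c) (fun r => b1 r t)).
         ++ by move=> y /= y0; lra.
         ++ by apply: cvgD; [exact: cvg_id | exact: cvg_cst].
         ++ apply: within_cont; first by case: (b1K t t0) => [].
            by rewrite /=; move: r0 => /= ; lra.
      -- by apply: within_cont => //; case: sK => [[]].
    * case: sK => [[_ [s0 _]] _].
      rewrite add0r s0; apply/eqP; rewrite eq_le; apply/andP; split.
        by rewrite ge_min lexx orbT.
      by rewrite le_min lexx andbT; apply: classK_ge0 (b1K t t0) c0.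
    * move=> x y x0 xy; case: sK => [[_ [_ si]] _].
      case: (b1K t t0) => [_ [_ bi]].
      rewrite lt_min !gt_min.
      rewrite (bi (x + c) (y + c)); last by lra.
      by rewrite (si x y) // orbT.
      by lra.
  + move=> r r0; split.
    * move=> u v u0 uv; rewrite le_min !ge_min.
      by rewrite (proj1 (b1L (r + c) _) u v) //= ?lexx ?orbT //; lra.
    * apply: (@squeeze_cvgr _ _ _ _ (fun=> 0) (fun t => b1 (r + c) t)).
      -- near=> t.
         have t0 : 0 <= t by near: t; apply: nbhs_pinfty_ge; rewrite real0.
         rewrite ge_min lexx /= andbT le_min.
         apply/andP; split; first by have := @classK_ge0 R (b1^~ t) (r + c) (b1K t t0); apply; lra.
         by apply: classK_ge0 => //; case: sK.
      -- exact: cvg_cst.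
      -- by apply: (proj2 (b1L (r + c) _)); lra.
- case: g1K => [[g1c [g10 g1i]] g1u]; case: g2K => [[g2c [g20 g2i]] g2u].
  split; [split; [|split]|].
  + apply/subspace_continuousP => r r0.
    by apply: cvgD; apply: within_cont.
  + by rewrite g10 g20 addr0.
  + by move=> x y x0 xy; apply: ltrD; [apply: g1i | apply: g2i].
  + move=> M; have [x [x0 Mx]] := g1u M; exists x; split => //.
    have : 0 <= g2 x by apply: (@classK_ge0 R g2) => //; split.
    lra.
- move=> x u t uU tT.
  have t0 : 0 <= t by move: tT; rewrite /timeset; case: ifP => _ /=; [move=> [n ->]; exact: ler0n | by []].
  have n0 := nU0 _ uU.
  have G1 : 0 <= g1 (normU u) by apply: classK_ge0 n0; case: g1K.
  have G2 : 0 <= g2 (normU u) by apply: classK_ge0 n0; case: g2K.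
  have H1 := Hb x u t uU tT; have H2 := Hs x u t uU tT.
  rewrite -lerBlDr le_min; apply/andP; split; lra.
Unshelve. all: by end_near. Qed.
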